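(* Let $F$ be a field of characteristic $0$, $d\ge1$, let $\lambda=(h_1,\dots,h_n)\vdash k$, let $\sigma\in S_n$, and let $\sigma(\lambda)=(\mu_1,\dots,\mu_l)\vdash k$. Let $G:=ST(\lambda)(x_1,\dots,x_k)$, evaluated at $x_1,\dots,x_k\in M_d(F)$, viewed as an element of $M_d(F)^{\otimes n}=\mathrm{End}((F^d)^{\otimes n})$. If some $\mu_i$ is even or the $\mu_i$ are not pairwise distinct, then $\mathrm{tr}(\sigma G)=0$ for all $x_1,\dots,x_k$. Otherwise there is a sign $\pm$ (independent of the $x_i$) such that, as functions of $(x_1,\dots,x_k)\in M_d(F)^k$, $$\mathrm{tr}(\sigma G)=\pm\,T_{\mu_1}\wedge\cdots\wedge T_{\mu_l}.$$
   Context: $ST(\lambda)$: for a partition $\lambda=(h_1,\dots,h_n)\vdash k$, set $X_j:=x_{h_1+\dots+h_{j-1}+1}\cdots x_{h_1+\dots+h_j}$ and $ST(\lambda)(x_1,\dots,x_k):=\sum_{\tau\in S_k}\epsilon_\tau (X_1\otimes\cdots\otimes X_n)(x_{\tau(1)},\dots,x_{\tau(k)})$, the alternation of $X_1\otimes\cdots\otimes X_n$ over $x_1,\dots,x_k$. $S_n$ acts on $(F^d)^{\otimes n}$ by permuting tensor factors, normalized so that $\mathrm{tr}((m,m-1,\dots,1)\,y_1\otimes\cdots\otimes y_m)=\mathrm{tr}(y_1y_2\cdots y_m)$. For $\sigma\in S_n$ with cycle decomposition $c_1\cdots c_l$ (fixed points included as $1$-cycles), $\sigma(\lambda)$ is the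 partition $(\sum_{i\in c_1}h_i,\dots,\sum_{i\in c_l}h_i)$ arranged non-increasingly. $T_j(y_1,\dots,y_j):=\mathrm{tr}\big(\sum_{\tau\in S_j}\epsilon_\tau y_{\tau(1)}\cdots y_{\tau(j)}\big)$. For multilinear alternating functions $f$ in $h$ variables and $g$ in $m$ variables, $(f\wedge g)(x_1,\dots,x_{h+m}):=\frac{1}{h!m!}\sum_{\tau\in S_{h+m}}\epsilon_\tau f(x_{\tau(1)},\dots,x_{\tau(h)})g(x_{\tau(h+1)},\dots,x_{\tau(h+m)})$ (associative). *)

(* Defs.v *)
From HB Require Import structures.
From mathcomp Require Import all_boot all_order all_algebra all_fingroup.
Set Implicit Arguments. Unset Strict Implicit. Unset Printing Implicit Defensive.
Import Order.TTheory GRing.Theory Num.Theory.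
Local Open Scope ring_scope.

Section Defs.
Variable F : fieldType.
Variable d : nat.

Notation mprod := (@mulmx F d d d).

(* (F^d)^{(x)n} has basis e_i indexed by i : 'I_n -> 'I_d; an endomorphism A is
   given by its kernel: A i j = coefficient of e_i in A e_j. *)
Definition tidx (n : nat) := {ffun 'I_n -> 'I_d}.
Definition endo (n : nat) := tidx n -> tidx n -> F.

Definition endo_comp n (A B : endo n) : endo n :=
  fun i j => \sum_(l : tidx n) A i l * B l j.
Definition endo_tr n (A : endo n) : F := \sum_(i : tidx n) A i i.

Definition tensor n (y : 'I_n -> 'M[F]_d) : endo n :=
  fun i j => \prod_(t < n) y t (i t) (j t).

(* action of sigma permuting tensor factors: v_t is sent to position sigma t,
   i.e. sigma e_j = e_{j o sigma^-1}.  With this convention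
   tr((m,m-1,...,1) y_1 (x) ... (x) y_m) = tr(y_1 ... y_m). *)
Definition permop n (s : 'S_n) : endo n :=
  fun i j => ([forall t, i (s t) == j t])%:R.

(* X_j evaluated at x_{tau(1)},...,x_{tau(k)} (0-based indices) *)
Definition Xblock n k (h : 'I_n -> nat) (x : nat -> 'M[F]_d) (tau : 'S_k)
  (j : 'I_n) : 'M[F]_d :=
  let a := (\sum_(i < n | i < j) h i)%N in
  \big[mprod/1%:M]_(p < k | (a <= p)%N && (p < a + h j)%N) x (val (tau p)).

Definition ST_G n k (h : 'I_n -> nat) (x : nat -> 'M[F]_d) : endo n :=
  fun i j => \sum_(tau : 'S_k) (-1) ^+ odd_perm tau *
               tensor (Xblock h x tau) i j.

Definition trSG n k (h : 'I_n -> nat) (s : 'S_n) (x : nat -> 'M[F]_d) : F :=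
  endo_tr (endo_comp (permop s) (ST_G k h x)).

Definition Tj (j : nat) (x : nat -> 'M[F]_d) : F :=
  \tr (\sum_(tau : 'S_j) (-1) ^+ odd_perm tau *:
         \big[mprod/1%:M]_(p < j) x (val (tau p))).

Definition permnat N (tau : 'S_N) (i : nat) : nat :=
  oapp (fun o : 'I_N => val (tau o)) i (insub i).

Definition wedge (h m : nat) (f g : (nat -> 'M[F]_d) -> F)
  (x : nat -> 'M[F]_d) : F :=
  (h`!%:R * m`!%:R)^-1 *
  \sum_(tau : 'S_(h + m)) (-1) ^+ odd_perm tau *
     f (fun i => x (permnat tau i)) * g (fun i => x (permnat tau (h + i))).

(* T_{mu_1} /\ ... /\ T_{mu_l} (bracketed to the right; wedge is associative) *)
Fixpoint wedgeT (s : seq nat) : (nat -> 'M[F]_d) -> F :=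
  match s with
  | [::] => fun _ => 1
  | m :: s' => wedge m (sumn s') (Tj m) (wedgeT s')
  end.

End Defs.

(* sigma(lambda): the sums of h over the cycles of sigma (fixed points
   included), arranged non-increasingly *)
Definition cyc_type n (h : 'I_n -> nat) (s : 'S_n) : seq nat :=
  sort geq [seq (\sum_(i in c) h i)%N | c : {set 'I_n} <- enum (porbits s)].

(* Main.v *)
Require Import Defs.
From HB Require Import structures.
From mathcomp Require Import all_boot all_order all_algebra all_fingroup.
From mathcomp Require Import ring zify.
Import Order.TTheory GRing.Theory Num.Theory.
Local Open Scope ring_scope.
Set Implicit Arguments. Unset Strict Implicit. Unset Printing Implicit Defensive.

Section Orb.
Variable T : finType.
Implicit Types (s : {perm T}).

Lemma porbit_stable s (S : {set T}) z :
  (forall u, u \in S -> s u \in S) -> z \in S -> porbit s z \subset S.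
Proof.
move=> st zS; apply/subsetP => y /porbitP [i ->]; rewrite permX.
by elim: i => //= i IH; apply: st.
Qed.

Lemma porbitS s z v : v \in porbit s z -> s v \in porbit s z.
Proof.
move=> vz; have <- : porbit s v = porbit s z by apply/eqP; rewrite eq_porbit_mem.
by have := mem_porbit s 1 v; rewrite expg1.
Qed.

Lemma porbit_merge s q r : s q = r -> q != r ->
  porbit (tperm q r * s)%g r = [set r] /\
  forall z, z != r -> porbit (tperm q r * s)%g z = porbit s z :\ r.
Proof.
move=> sq qr; set s' := (tperm q r * s)%g.
have s'E u : s' u = s (tperm q r u) by rewrite permM.
have sE u : s u = s' (tperm q r u) by rewrite s'E tpermK.
have s'r : s' r = r by rewrite s'E tpermR.
have srr : s r != r.
  apply/negP => /eqP e; have := perm_inj (etrans e (esym sq)).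
  by move=> rq; move: qr; rewrite rq eqxx.
have Pr : porbit s' r = [set r].
  apply/eqP; rewrite eqEsubset; apply/andP; split.
    by apply: porbit_stable; [move=> u; rewrite inE => /eqP ->; rewrite s'r inE | rewrite inE].
  by rewrite sub1set porbit_id.
have rNo z : z != r -> r \notin porbit s' z.
  move=> zr; apply: contra zr; rewrite porbit_sym Pr inE; exact: id.
split => // z zr; apply/eqP; rewrite eqEsubset; apply/andP; split.
  apply: porbit_stable; last by rewrite !inE zr porbit_id.
  move=> u; rewrite !inE => /andP[ur uz]; rewrite s'E.
  have [uq|uq] := eqVneq u q.
    subst u; rewrite tpermL srr /=; apply: porbitS; rewrite -sq; exact: porbitS.
  rewrite tpermD 1?eq_sym //; apply/andP; split; last exact: porbitS.
  by apply: contra uq; rewrite -sq => /eqP /perm_inj ->.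
have [qS|qS] := boolP (q \in porbit s' z).
  have H : porbit s z \subset porbit s' z :|: [set r].
    apply: porbit_stable; last by rewrite inE porbit_id.
    move=> u; rewrite !inE => /orP[uS|/eqP ->]; last by rewrite sE tpermR porbitS.
    have ur : u != r by apply: contraNneq (rNo z zr) => <-.
    have [uq|uq] := eqVneq u q; first by rewrite uq sq eqxx orbT.
    by rewrite sE tpermD 1?eq_sym // porbitS.
  apply/subsetP => v; rewrite !inE => /andP[vr vz].
  by move/subsetP: H => /(_ v vz); rewrite !inE (negPf vr) orbF.
have H : porbit s z \subset porbit s' z.
  apply: porbit_stable; last exact: porbit_id.
  move=> u uS; have ur : u != r by apply: contraNneq (rNo z zr) => <-.
  have uq : u != q by apply: contraNneq qS => <-.
  by rewrite sE tpermD 1?eq_sym // porbitS.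
by apply/subsetP => v; rewrite !inE => /andP[_ vz]; move/subsetP: H; apply.
Qed.


Definition csum (w : T -> seq nat) (C : {set T}) : nat := (\sum_(t in C) size (w t))%N.

Lemma porbits_mem s z : porbit s z \in porbits s.
Proof. by apply: imset_f. Qed.

Lemma cnt_merge s q r (w : T -> seq nat) m : s q = r -> q != r -> (0 < m)%N ->
  let w' := fun t => if t == q then w r ++ w q else if t == r then [::] else w t in
  #|[set C in porbits (tperm q r * s)%g | csum w' C == m]| =
  #|[set C in porbits s | csum w C == m]|.
Proof.
move=> sq qr m0 w'; set s' := (tperm q r * s)%g.
have [Pr Pz] := porbit_merge sq qr.
have rq : porbit s r = porbit s q.
  by apply/eqP; rewrite eq_porbit_mem -sq porbitS // porbit_id.
have F1 C : C \in porbits s -> exists2 z, z != r & C = porbit s z.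
  case/imsetP => z0 _ ->; have [->|z0r] := eqVneq z0 r; last by exists z0.
  by exists q; rewrite // rq.
have F3 z : z != r -> csum w' (porbit s' z) = csum w (porbit s z).
  move=> zr; rewrite Pz // /csum.
  have [qC|qC] := boolP (q \in porbit s z).
    have rC : r \in porbit s z by rewrite -sq porbitS.
    rewrite [in RHS](bigD1 r) //= (bigD1 q) /=; last by rewrite !inE qr qC.
    rewrite /w' eqxx size_cat -addnA; congr (_ + _)%N.
    rewrite [in RHS](bigD1 q) /=; last by rewrite qC qr.
    congr (_ + _)%N; apply: eq_big => [t|t /andP[]].
      by rewrite !inE; case: (t \in _); case: (t != r).
    by rewrite !inE => /andP[tr _] tq; rewrite (negPf tq) (negPf tr).
  have rC : r \notin porbit s z.
    by apply: contra qC => rC; rewrite -eq_porbit_mem -rq eq_porbit_mem.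
  apply: eq_big => [t|t]; first by rewrite !inE; case: eqP => // ->; rewrite (negPf rC).
  rewrite !inE => /andP[tr tC]; rewrite /w' (negPf tr).
  by have [tq|//] := eqVneq t q; move: qC; rewrite -tq tC.
have A : [set C in porbits s' | csum w' C == m] =
         (fun C => C :\ r) @: [set C in porbits s | csum w C == m].
  apply/setP => C'; apply/idP/idP.
    rewrite inE => /andP[/imsetP[z _ ->] cm].
    have [zr|zr] := eqVneq z r.
      move: cm; rewrite zr Pr /csum big_set1 /w' (eq_sym r q) (negPf qr) eqxx /= => /eqP m00.
      by move: m0; rewrite -m00.
    apply/imsetP; exists (porbit s z); last by rewrite Pz.
    by rewrite inE porbits_mem -F3.
  case/imsetP => C; rewrite inE => /andP[CP cm] ->.
  have [z zr eC] := F1 C CP; subst C.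
  by rewrite -Pz // inE porbits_mem F3.
rewrite A card_in_imset // => C1 C2; rewrite !inE => /andP[C1P _] /andP[C2P _].
have [z1 z1r ->] := F1 C1 C1P; have [z2 z2r ->] := F1 C2 C2P.
rewrite -!Pz // => e; apply/eqP; rewrite eq_porbit_mem.
have : z1 \in porbit s' z2 by rewrite -e porbit_id.
by rewrite Pz // inE => /andP[].
Qed.

End Orb.

Section Main.
Variable F : fieldType.
Variable d : nat.
Local Notation M := 'M[F]_d.

HB.instance Definition _ := Monoid.isLaw.Build M 1%:M (@mulmx F d d d)
  (@mulmxA F d d d d) (@mul1mx F d d) (@mulmx1 F d d).

Definition wmat (y : nat -> M) (w : seq nat) : M :=
  \big[@mulmx F d d d/1%:M]_(p <- w) y p.

Lemma wmat_cat y u v : wmat y (u ++ v) = wmat y u *m wmat y v.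
Proof. by rewrite /wmat big_cat. Qed.

Lemma sgnM k (a b : 'S_k) :
  (-1) ^+ odd_perm (a * b)%g = (-1) ^+ odd_perm a * (-1) ^+ odd_perm b :> F.
Proof. by rewrite odd_permM signr_addb. Qed.

Lemma sum_sgn_reindex k (rho : 'S_k) (f : 'S_k -> F) :
  \sum_(t : 'S_k) (-1) ^+ odd_perm t * f (rho * t)%g =
  (-1) ^+ odd_perm rho * \sum_(t : 'S_k) (-1) ^+ odd_perm t * f t.
Proof.
rewrite mulr_sumr (reindex_inj (mulgI rho^-1)%g) /=.
apply: eq_bigr => t _; rewrite mulgA mulgV mul1g sgnM odd_permV mulrA.
rewrite -signr_addb. case: (odd_perm rho); rewrite ?expr0 ?mul1r // sqrrN1 mul1r.
Qed.

Lemma permnat_ord k (t : 'S_k) (p : 'I_k) : permnat t p = t p.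
Proof. by rewrite /permnat valK. Qed.

Lemma permnat_out k (t : 'S_k) p : (k <= p)%N -> permnat t p = p.
Proof. by move=> kp; rewrite /permnat insubN // -leqNgt. Qed.

Lemma permnat_lt k (t : 'S_k) p : (permnat t p < k)%N = (p < k)%N.
Proof.
case: (ltnP p k) => pk; last by rewrite permnat_out // ltnNge pk.
by rewrite -[p]/(val (Ordinal pk)) permnat_ord ltn_ord.
Qed.

Lemma permnatM k (a b : 'S_k) p : permnat (a * b)%g p = permnat b (permnat a p).
Proof.
case: (ltnP p k) => pk; last by rewrite !permnat_out // permnat_lt ltnNge pk.
by rewrite -[p]/(val (Ordinal pk)) !permnat_ord permM.
Qed.


Lemma permnat1 k p : permnat (1%g : 'S_k) p = p.
Proof.
case: (ltnP p k) => pk; last by rewrite permnat_out.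
by rewrite -[p]/(val (Ordinal pk)) permnat_ord perm1.
Qed.

Definition Psi k (W : seq (seq nat)) (x : nat -> M) : F :=
  \sum_(t : 'S_k) (-1) ^+ odd_perm t *
     \prod_(u <- W) \tr (wmat (fun p => x (permnat t p)) u).

Lemma Psi_relabel k (rho : 'S_k) W x :
  Psi k (map (map (permnat rho)) W) x = (-1) ^+ odd_perm rho * Psi k W x.
Proof.
rewrite /Psi -sum_sgn_reindex; apply: eq_bigr => t _; congr (_ * _).
rewrite big_map; apply: eq_bigr => u _; rewrite /wmat big_map.
by congr (\tr _); apply: eq_bigr => p _; rewrite permnatM.
Qed.

Lemma Psi_perm k W1 W2 x : perm_eq W1 W2 -> Psi k W1 x = Psi k W2 x.
Proof. by move=> pW; apply: eq_bigr => t _; rewrite (perm_big _ pW). Qed.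

Lemma tr_wmat_rot y u : \tr (wmat y (rot 1 u)) = \tr (wmat y u).
Proof.
by rewrite /rot wmat_cat mxtrace_mulC -wmat_cat cat_take_drop.
Qed.

Definition ntp (a b p : nat) : nat := if p == a then b else if p == b then a else p.

Definition tpn k (a b : nat) : 'S_k :=
  match insub a, insub b with Some oa, Some ob => tperm oa ob | _, _ => 1%g end.

Lemma permnat_tpn k a b p : (a < k)%N -> (b < k)%N ->
  permnat (tpn k a b) p = ntp a b p.
Proof.
move=> ak bk; rewrite /tpn.
case: insubP => [oa _ ea|]; last by rewrite ak.
case: insubP => [ob _ eb|]; last by rewrite bk.
rewrite /ntp; subst a b.
case: (ltnP p k) => pk; last first.
  rewrite permnat_out //; case: eqP => [e|_]; first by move: (ltn_ord oa); rewrite -e ltnNge pk.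
  by case: eqP => [e|_] //; move: (ltn_ord ob); rewrite -e ltnNge pk.
rewrite -[p]/(val (Ordinal pk)) permnat_ord.
case: tpermP => [e|e|na nb].
- by rewrite -e eqxx.
- rewrite -e /=; case: eqP => [E|_] /=; [by rewrite E | by rewrite eqxx].
- rewrite /=; have /negPf -> : p != val oa.
    by apply/eqP => E; apply: na; apply: val_inj; exact: E.
  have /negPf -> // : p != val ob.
  by apply/eqP => E; apply: nb; apply: val_inj; exact: E.
Qed.

Lemma odd_tpn k a b : (a < k)%N -> (b < k)%N -> odd_perm (tpn k a b) = (a != b).
Proof.
move=> ak bk; rewrite /tpn.
case: insubP => [oa _ ea|]; last by rewrite ak.
case: insubP => [ob _ eb|]; last by rewrite bk.
by rewrite odd_tperm -val_eqE ea eb.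
Qed.

Fixpoint cycp k (u : seq nat) : 'S_k :=
  if u is a :: l then (if l is b :: _ then (tpn k a b * cycp k l)%g else 1%g)
  else 1%g.

Lemma cycp_out k u p : all (fun q => q < k)%N u -> p \notin u ->
  permnat (cycp k u) p = p.
Proof.
elim: u => [|a [|b l] IH] /=; rewrite ?permnat1 // => /and3P[ak bk al].
rewrite !inE !negb_or => /and3P[pa pb pl]; rewrite permnatM permnat_tpn //.
rewrite /ntp (negPf pa) (negPf pb) IH //= ?bk ?inE ?negb_or ?pb //.
Qed.

Lemma cycp_rot k u : all (fun q => q < k)%N u -> uniq u ->
  map (permnat (cycp k u)) (rot 1 u) = u.
Proof.
elim: u => [|a [|b l] IH] //; first by rewrite /= permnat1.
move=> /and3P[ak bk al] /andP[aN ubl].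
have IH' := IH (introT andP (conj bk al)) ubl.
have bna : (b == a) = false.
  by apply/negbTE; apply: contra aN => /eqP ->; rewrite inE eqxx.
rewrite (_ : cycp k [:: a, b & l] = (tpn k a b * cycp k (b :: l))%g) //.
move: IH'; set C := cycp k (b :: l); rewrite /rot /= !drop0 !take0 => IH'.
have bl : all (fun q => q < k)%N (b :: l) by apply/andP; split.
rewrite permnatM permnat_tpn // /ntp bna eqxx cycp_out //.
congr (_ :: _); rewrite -IH' !map_cat /=.
rewrite permnatM permnat_tpn // /ntp eqxx; congr (_ ++ [:: _]).
apply/eq_in_map => z zl.
rewrite permnatM permnat_tpn // /ntp.
have -> : (z == a) = false by apply/negbTE; apply: contra aN => /eqP <-; rewrite inE zl orbT.
have -> : (z == b) = false.
  by move: ubl => /andP[bN _]; apply/negbTE; apply: contra bN => /eqP <-.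
by [].
Qed.

Lemma cycp_odd k u : all (fun q => q < k)%N u -> uniq u ->
  odd_perm (cycp k u) = odd (size u).-1.
Proof.
elim: u => [|a [|b l] IH] /=; rewrite ?odd_perm1 // => /and3P[ak bk al] /andP[aN ubl].
rewrite odd_permM odd_tpn // IH //= ?bk //.
have -> : (a != b) by apply: contra aN => /eqP ->; rewrite inE eqxx.
by [].
Qed.


Fixpoint swp k (u v : seq nat) : 'S_k :=
  match u, v with a :: u', b :: v' => (tpn k a b * swp k u' v')%g | _, _ => 1%g end.

Lemma swp_prop k u v : all (fun q => q < k)%N (u ++ v) -> uniq (u ++ v) ->
  size u = size v ->
  [/\ map (permnat (swp k u v)) u = v, map (permnat (swp k u v)) v = u,
      (forall p, p \notin u ++ v -> permnat (swp k u v) p = p)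
    & odd_perm (swp k u v) = odd (size u)].
Proof.
elim: u v => [|a u IH] [|b v] //=.
  by move=> _ _ _; split => //; [move=> p _; rewrite permnat1 | rewrite odd_perm1].
move=> /andP[ak]; rewrite all_cat /= => /and3P[au bk av].
move=> /andP[aN]; rewrite cat_uniq /= => /and4P[uu /norP[bu uvd] bv vv] [esz].
have auv : all (fun q => q < k)%N (u ++ v) by rewrite all_cat au av.
have uuv : uniq (u ++ v) by rewrite cat_uniq uu uvd vv.
have [mu mv mo modd] := IH v auv uuv esz.
move: aN; rewrite mem_cat inE negb_or => /andP[aNu /norP[anb aNv]].
have aNuv : a \notin u ++ v by rewrite mem_cat negb_or aNu aNv.
have bNuv : b \notin u ++ v by rewrite mem_cat negb_or bu bv.
have ntpE p : p != a -> p != b -> ntp a b p = p.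
  by move=> pa pb; rewrite /ntp (negPf pa) (negPf pb).
split.
- rewrite permnatM permnat_tpn // /ntp eqxx mo //; congr (_ :: _).
  rewrite -[RHS]mu; apply/eq_in_map => z zu.
  rewrite permnatM permnat_tpn // ntpE //.
    by apply: contraTneq zu => ->.
  by apply: contraTneq zu => ->.
- rewrite permnatM permnat_tpn // /ntp eqxx eq_sym (negPf anb).
  rewrite mo //; congr (_ :: _).
  rewrite -[RHS]mv; apply/eq_in_map => z zv.
  rewrite permnatM permnat_tpn // ntpE //.
    by apply: contraTneq zv => ->.
  by apply: contraTneq zv => ->.
- move=> p; rewrite !inE mem_cat inE !negb_or => /and4P[pa pu pb pv].
  rewrite permnatM permnat_tpn // ntpE // mo //.
  by rewrite mem_cat negb_or pu pv.
- by rewrite odd_permM odd_tpn // anb modd.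
Qed.

Lemma twice_zero (a : F) : (2%:R : F) != 0 -> a = - a -> a = 0.
Proof.
move=> h2 e; have : 2%:R * a = 0 by rewrite mulr_natl mulr2n {1}e addNr.
by move/eqP; rewrite mulf_eq0 (negPf h2) => /eqP.
Qed.

Lemma Psi_swapC k u v W x : Psi k [:: v, u & W] x = Psi k [:: u, v & W] x.
Proof. by rewrite /Psi; apply: eq_bigr => t _; congr (_ * _); rewrite !big_cons mulrCA. Qed.

Lemma Psi_rot k u W x : Psi k (rot 1 u :: W) x = Psi k (u :: W) x.
Proof. by rewrite /Psi; apply: eq_bigr => t _; rewrite !big_cons tr_wmat_rot. Qed.

Lemma map_id_disj k (r : 'S_k) (W : seq (seq nat)) :
  (forall p, p \in flatten W -> permnat r p = p) ->
  map (map (permnat r)) W = W.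
Proof.
move=> H; apply: map_id_in => w wW; apply: map_id_in => p pw.
by apply: H; apply/flattenP; exists w.
Qed.

Lemma Psi_swap_zero k u v W x : (2%:R : F) != 0 ->
  all (fun q => q < k)%N (flatten [:: u, v & W]) ->
  uniq (flatten [:: u, v & W]) -> size u = size v -> odd (size u) ->
  Psi k [:: u, v & W] x = 0.
Proof.
move=> h2; rewrite /= catA all_cat cat_uniq => /andP[auv _] /and3P[uuv dW _] esz ou.
have [mu mv mo modd] := swp_prop auv uuv esz.
apply: twice_zero => //.
have HW : map (map (permnat (swp k u v))) W = W.
  rewrite map_id_disj // => p pW; apply: mo.
  by apply: contra dW => puv; apply/hasP; exists p.
have E : map (map (permnat (swp k u v))) [:: u, v & W] = [:: v, u & W].
  by rewrite /= mu mv HW.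
rewrite -{1}Psi_swapC -{1}E Psi_relabel modd ou expr1 mulN1r.
by [].
Qed.

Lemma Psi_even_zero k u W x : (2%:R : F) != 0 ->
  all (fun q => q < k)%N (flatten (u :: W)) ->
  uniq (flatten (u :: W)) -> u != [::] -> ~~ odd (size u) ->
  Psi k (u :: W) x = 0.
Proof.
move=> h2; rewrite /= all_cat cat_uniq => /andP[au _] /and3P[uu dW _] un ev.
apply: twice_zero => //.
have mr := cycp_rot au uu.
have HW : map (map (permnat (cycp k u))) W = W.
  rewrite map_id_disj // => p pW; apply: cycp_out => //.
  by apply: contra dW => pu; apply/hasP; exists p.
have E : map (map (permnat (cycp k u))) (rot 1 u :: W) = u :: W.
  by rewrite /= mr HW.
rewrite -{1}E Psi_relabel Psi_rot cycp_odd //.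
have su : (0 < size u)%N by rewrite lt0n size_eq0.
move: ev su; case: (size u) => [|n] //=; rewrite negbK => -> _.
by rewrite expr1 mulN1r.
Qed.


Definition TM n (s : 'S_n) (Y : 'I_n -> M) : F :=
  \sum_(i : tidx d n) \prod_(t < n) Y t (i (s t)) (i t).

Lemma eq_TM n (s : 'S_n) (Y1 Y2 : 'I_n -> M) :
  (forall t, Y1 t = Y2 t) -> TM s Y1 = TM s Y2.
Proof. by move=> e; apply: eq_bigr => i _; apply: eq_bigr => t _; rewrite e. Qed.

Lemma TM1 n (Y : 'I_n -> M) : TM 1%g Y = \prod_t \tr (Y t).
Proof.
rewrite /TM /mxtrace bigA_distr_bigA; apply: eq_bigr => i _.
by apply: eq_bigr => t _; rewrite perm1.
Qed.

Definition upd n (i : tidx d n) (r : 'I_n) (c : 'I_d) : tidx d n :=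
  [ffun t => if t == r then c else i t].

Lemma sum_upd n (r : 'I_n) (G : tidx d n -> 'I_d -> F) :
  \sum_(i : tidx d n) \sum_(c < d) G i c =
  \sum_(i : tidx d n) \sum_(c < d) G (upd i r c) (i r).
Proof.
rewrite !pair_big /=.
pose phi (p : tidx d n * 'I_d) := (upd p.1 r p.2, p.1 r).
have phiK : involutive phi.
  move=> [i c]; rewrite /phi /= ffunE eqxx; congr (_, _).
  by apply/ffunP => t; rewrite !ffunE; case: eqP => // ->.
by rewrite (reindex_inj (inv_inj phiK)).
Qed.

Lemma prod2 n (f : 'I_n -> F) (q r : 'I_n) : q != r ->
  \prod_t f t = f q * (f r * \prod_(t | (t != q) && (t != r)) f t).
Proof. by move=> qr; rewrite (bigD1 q) // (bigD1 r) //= eq_sym. Qed.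

Definition Emx (i0 : 'I_d) : M := delta_mx i0 i0.

Lemma sum_Emx i0 : \sum_(c < d) Emx i0 c c = 1.
Proof.
rewrite (bigD1 i0) //= big1 ?addr0; first by rewrite mxE !eqxx.
by move=> c ci; rewrite mxE (negPf ci).
Qed.

Lemma TM_merge n (s : 'S_n) (Y : 'I_n -> M) (q r : 'I_n) (i0 : 'I_d) :
  s q = r -> q != r ->
  TM s Y = TM (tperm q r * s)%g
    (fun t => if t == q then Y r *m Y q else if t == r then Emx i0 else Y t).
Proof.
move=> sq qr.
have hs t : t != q -> (s t == r) = false.
  by move=> tq; apply/negbTE; apply: contra tq; rewrite -sq => /eqP /perm_inj ->.
have sr : (s r == r) = false by apply: hs; rewrite eq_sym.
pose A (i : tidx d n) := \prod_(t | (t != q) && (t != r)) Y t (i (s t)) (i t).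
have LHS : TM s Y = \sum_(i : tidx d n) \sum_(c < d)
    Y q c (i q) * (Y r (i (s r)) c * A i) * Emx i0 (i r) (i r).
  rewrite /TM; under eq_bigr => i _ do rewrite (prod2 _ qr) sq.
  rewrite -[LHS]/(\sum_(i : tidx d n) _).
  transitivity (\sum_(i : tidx d n) \sum_(c < d)
     Y q (i r) (i q) * (Y r (i (s r)) (i r) * A i) * Emx i0 c c).
    by apply: eq_bigr => i _; rewrite -mulr_sumr sum_Emx mulr1.
  rewrite (sum_upd r); apply: eq_bigr => i _; apply: eq_bigr => c _.
  rewrite !ffunE eqxx (negPf qr) sr; congr (_ * (_ * _) * _).
  apply: eq_bigr => t /andP[tq tr]; rewrite !ffunE (negPf tr) hs //.
rewrite LHS /TM; apply: eq_bigr => i _.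
rewrite (prod2 _ qr) !permM tpermL tpermR sq eqxx.
rewrite (eq_sym r q) (negPf qr) eqxx [(Y r *m Y q) _ _]mxE mulr_suml.
apply: eq_bigr => c _.
have -> : \prod_(t | (t != q) && (t != r))
    (if t == q then Y r *m Y q else if t == r then Emx i0 else Y t)
      (i ((tperm q r * s)%g t)) (i t) = A i.
  apply: eq_bigr => t /andP[tq tr]; rewrite (negPf tq) (negPf tr) permM tpermD //.
    by rewrite eq_sym.
  by rewrite eq_sym.
ring.
Qed.


Definition mw (i0 : 'I_d) (y : nat -> M) (u : seq nat) : M :=
  if u is [::] then Emx i0 else wmat y u.

Lemma sum2n n (f : 'I_n -> nat) (q r : 'I_n) : q != r ->
  (\sum_t f t = f q + (f r + \sum_(t | (t != q) && (t != r)) f t))%N.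
Proof. by move=> qr; rewrite (bigD1 q) // (bigD1 r) //= eq_sym. Qed.

Lemma porbit1 n (t : 'I_n) : porbit 1%g t = [set t].
Proof.
apply/eqP; rewrite eqEsubset sub1set porbit_id andbT.
by apply: porbit_stable; [move=> u; rewrite perm1 | rewrite inE].
Qed.

Lemma reduce n (i0 : 'I_d) (s : 'S_n) (w : 'I_n -> seq nat) :
  (forall t, w t = [::] -> s t = t) ->
  exists w' : 'I_n -> seq nat,
   [/\ forall y, TM s (fun t => mw i0 y (w t)) = \prod_t \tr (mw i0 y (w' t)),
       forall P : pred nat, (\sum_t count P (w' t) = \sum_t count P (w t))%N
     & forall m, (0 < m)%N -> #|[set t | size (w' t) == m]| =
                              #|[set C in porbits s | csum w C == m]|].
Proof.
have [N] := ubnP #|[set t | s t != t]|; elim: N s w => // N IH s w HN Hw.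
case: (pickP [pred t | s t != t]) => [q /= sqq | sfix]; last first.
  have s1 : s = 1%g.
    by apply/permP => t; rewrite perm1; move: (sfix t) => /= /negbFE /eqP.
  subst s; exists w; split => //.
    by move=> y; rewrite TM1.
  move=> m m0.
  have -> : [set C in porbits 1%g | csum w C == m] =
            (fun t => [set t]) @: [set t | size (w t) == m].
    apply/setP => C; apply/idP/idP.
      rewrite inE => /andP[/imsetP[t _ ->] cm]; rewrite porbit1 in cm *.
      by apply/imsetP; exists t => //; rewrite inE; move: cm; rewrite /csum big_set1.
    case/imsetP => t; rewrite inE => tm ->.
    by rewrite inE -porbit1 porbits_mem /csum porbit1 big_set1 tm.
  by rewrite card_imset //; apply: set1_inj.
set r := s q; have qr : q != r by rewrite eq_sym.
have wq : w q != [::] by apply/eqP => /Hw /eqP; rewrite (negPf sqq).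
have srr : s r != r.
  apply/negP => /eqP e; have := perm_inj (etrans e (erefl : r = s q)).
  by move=> rq; move: qr; rewrite rq eqxx.
have wr : w r != [::] by apply/eqP => /Hw /eqP; rewrite (negPf srr).
pose w' := fun t => if t == q then w r ++ w q else if t == r then [::] else w t.
pose s' := (tperm q r * s)%g.
have Hw' : forall t, w' t = [::] -> s' t = t.
  move=> t; rewrite /w'; case: eqP => [-> | /eqP tq].
    by case: (w r) wr.
  case: eqP => [-> _ | /eqP tr]; first by rewrite permM tpermR.
  by move=> /Hw st; rewrite permM tpermD 1?eq_sym.
have meas : (#|[set t | s' t != t]| < N)%N.
  have pc : (#|[set t | s' t != t]| < #|[set t | s t != t]|)%N; last first.
    by apply: leq_trans pc _; rewrite -ltnS.
  apply: proper_card; apply/properP; split.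
    apply/subsetP => t; rewrite !inE permM.
    have [->|tq] := eqVneq t q; first by rewrite sqq.
    have [->|tr] := eqVneq t r; first by rewrite tpermR eqxx.
    by rewrite tpermD 1?eq_sym.
  by exists r; rewrite !inE ?srr // permM tpermR eqxx.
have [w'' [h1 h2 h3]] := IH s' w' meas Hw'.
exists w''; split.
- move=> y; rewrite (TM_merge _ i0 (erefl : s q = r) qr) -h1; apply: eq_TM => t.
  have mwE u : u != [::] -> mw i0 y u = wmat y u by case: u.
  rewrite /w'; case: eqP => [_ | _].
    by rewrite !mwE ?wmat_cat //; case: (w r) wr.
  by case: eqP.
- move=> P; rewrite h2 (sum2n _ qr) [in RHS](sum2n _ qr) /w' eqxx.
  rewrite (eq_sym r q) (negPf qr) eqxx count_cat /=.
  rewrite (eq_bigr (fun t => count P (w t))); first by lia.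
  by move=> t /andP[tq tr]; rewrite (negPf tq) (negPf tr).
- move=> m m0; rewrite h3 //.
  exact: (cnt_merge w (erefl : s q = r) qr m0).
Qed.


Lemma permnat_inj k (a b : 'S_k) : (forall p, permnat a p = permnat b p) -> a = b.
Proof.
move=> e; apply/permP => o; apply: val_inj; by have := e (val o); rewrite !permnat_ord.
Qed.

Definition summap m k' (a : 'S_m) (b : 'S_k') (u : 'I_m + 'I_k') : 'I_m + 'I_k' :=
  match u with inl i => inl (a i) | inr j => inr (b j) end.

Lemma summap_inj m k' (a : 'S_m) (b : 'S_k') : injective (summap a b).
Proof.
by case=> [i|j] [i'|j'] //= [] /perm_inj ->.
Qed.

Definition dsum m k' (a : 'S_m) (b : 'S_k') : 'S_(m + k') :=
  perm (inj_comp (can_inj (@unsplitK m k')) (inj_comp (@summap_inj m k' a b) (can_inj splitK))).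

Lemma permnat_dsum m k' (a : 'S_m) (b : 'S_k') p :
  permnat (dsum a b) p = if (p < m)%N then permnat a p else (m + permnat b (p - m))%N.
Proof.
case: (ltnP p (m + k')) => pk; last first.
  rewrite permnat_out // ltnNge (leq_trans (leq_addr k' m) pk) /= permnat_out.
    by rewrite subnKC // (leq_trans (leq_addr k' m) pk).
  by rewrite leq_subRL ?(leq_trans (leq_addr k' m) pk).
rewrite -[p]/(val (Ordinal pk)) permnat_ord /dsum permE /=.
case: splitP => [j /= ->|j /= ->]; first by rewrite ltn_ord permnat_ord.
by rewrite ltnNge leq_addr /= addKn permnat_ord.
Qed.

Lemma permnat_ntp k (i j : 'I_k) : tperm i j = tpn k i j.
Proof.
apply: permnat_inj => p; rewrite permnat_tpn //.
case: (ltnP p k) => pk; last first.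
  rewrite permnat_out // /ntp; case: eqP => [e|_]; first by move: (ltn_ord i); rewrite -e ltnNge pk.
  by case: eqP => [e|_] //; move: (ltn_ord j); rewrite -e ltnNge pk.
rewrite -[p]/(val (Ordinal pk)) permnat_ord /ntp.
case: tpermP => [e|e|na nb].
- by rewrite -e eqxx.
- rewrite -e /=; case: eqP => [E|_] /=; [by rewrite E | by rewrite eqxx].
- rewrite /=; have /negPf -> : p != val i.
    by apply/eqP => E; apply: na; apply: val_inj; exact: E.
  have /negPf -> // : p != val j.
  by apply/eqP => E; apply: nb; apply: val_inj; exact: E.
Qed.

Lemma dsumM m k' (a1 a2 : 'S_m) (b1 b2 : 'S_k') :
  dsum (a1 * a2)%g (b1 * b2)%g = (dsum a1 b1 * dsum a2 b2)%g.
Proof.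
apply: permnat_inj => p; rewrite permnatM !permnat_dsum !permnatM.
case: (ltnP p m) => pm; first by rewrite permnat_lt pm.
by rewrite ltnNge leq_addr /= addKn.
Qed.

Lemma dsum1 m k' : dsum (1%g : 'S_m) (1%g : 'S_k') = 1%g.
Proof.
apply: permnat_inj => p; rewrite permnat_dsum !permnat1.
by case: ltnP => // pm; rewrite subnKC.
Qed.

Lemma odd_dsuml m k' (a : 'S_m) : odd_perm (dsum a (1%g : 'S_k')) = odd_perm a.
Proof.
case: (prod_tpermP a) => ts -> _; elim: ts => [|t ts IH].
  by rewrite !big_nil dsum1 !odd_perm1.
rewrite !big_cons -[1%g as X in dsum _ X](mulg1 1%g) dsumM !odd_permM IH.
congr (_ (+) _).
have -> : dsum (tperm t.1 t.2) (1%g : 'S_k') = tpn (m + k') t.1 t.2.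
  apply: permnat_inj => p; rewrite permnat_dsum permnat_tpn ?ltn_addr //.
  case: ltnP => pm; first by rewrite permnat_ntp permnat_tpn.
  rewrite permnat1 subnKC // /ntp; case: eqP => [e|_].
    by move: (ltn_ord t.1); rewrite -e ltnNge pm.
  by case: eqP => [e|_] //; move: (ltn_ord t.2); rewrite -e ltnNge pm.
by rewrite odd_tpn ?ltn_addr // odd_tperm val_eqE.
Qed.

Lemma odd_dsumr m k' (b : 'S_k') : odd_perm (dsum (1%g : 'S_m) b) = odd_perm b.
Proof.
case: (prod_tpermP b) => ts -> _; elim: ts => [|t ts IH].
  by rewrite !big_nil dsum1 !odd_perm1.
rewrite !big_cons -[1%g as X in dsum X _](mulg1 1%g) dsumM !odd_permM IH.
congr (_ (+) _).
have -> : dsum (1%g : 'S_m) (tperm t.1 t.2) = tpn (m + k') (m + t.1) (m + t.2).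
  apply: permnat_inj => p; rewrite permnat_dsum permnat_tpn ?ltn_add2l //.
  case: ltnP => pm.
    rewrite permnat1 /ntp; case: eqP => [e|_].
      by move: pm; rewrite e ltnNge leq_addr.
    by case: eqP => [e|_] //; move: pm; rewrite e ltnNge leq_addr.
  rewrite permnat_ntp permnat_tpn // /ntp -(eqn_add2l m (p - m) t.1) subnKC //.
  rewrite -(eqn_add2l m (p - m) t.2) subnKC //.
  by case: eqP => _ //; case: eqP => _ //; rewrite subnKC.
by rewrite odd_tpn ?ltn_add2l // odd_tperm eqn_add2l val_eqE.
Qed.

Lemma odd_dsum m k' (a : 'S_m) (b : 'S_k') :
  odd_perm (dsum a b) = odd_perm a (+) odd_perm b.
Proof.
have -> : dsum a b = (dsum a 1 * dsum 1 b)%g by rewrite -dsumM mulg1 mul1g.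
by rewrite odd_permM odd_dsuml odd_dsumr.
Qed.


Lemma Tj_Psi m (y : nat -> M) : Tj m y = \sum_(s : 'S_m) (-1) ^+ odd_perm s *
   \tr (wmat (fun p => y (permnat s p)) (iota 0 m)).
Proof.
rewrite /Tj linear_sum /=; apply: eq_bigr => s _; rewrite mxtraceZ.
congr (_ * \tr _).
have -> : iota 0 m = index_iota 0 m by rewrite /index_iota subn0.
by rewrite /wmat big_mkord; apply: eq_bigr => p _; rewrite permnat_ord.
Qed.

Lemma W0_cons m mu : reshape (m :: mu) (iota 0 (m + sumn mu)) =
  iota 0 m :: map (map (addn m)) (reshape mu (iota 0 (sumn mu))).
Proof.
rewrite /= iotaD take_size_cat ?size_iota // drop_size_cat ?size_iota // add0n.
have -> : iota m (sumn mu) = map (addn m) (iota 0 (sumn mu)) by rewrite -iotaDl addn0.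
by rewrite map_reshape.
Qed.

Lemma fact_nz (hF : [pchar F] =i pred0) n : (n`!%:R : F) != 0.
Proof. by rewrite ((pcharf0P F).1 hF) -lt0n fact_gt0. Qed.

Lemma sum3 (I J : finType) (c : F) (f : I -> F) (g : J -> F) :
  c * (\sum_i f i) * (\sum_j g j) = \sum_i \sum_j c * f i * g j.
Proof.
rewrite -mulrA mulr_suml mulr_sumr; apply: eq_bigr => i _.
by rewrite !mulr_sumr; apply: eq_bigr => j _; rewrite mulrA.
Qed.

Lemma cancel_nat (a b : nat) (P : F) : (a%:R * b%:R : F) != 0 ->
  (a%:R * b%:R)^-1 * (P *+ b *+ a) = P.
Proof.
by move=> h; rewrite -[P *+ b]mulr_natl -[(_ * P) *+ a]mulr_natl (mulrA a%:R) mulrA mulVf // mul1r.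
Qed.

Lemma wedgeT_Psi (hF : [pchar F] =i pred0) mu x :
  wedgeT mu x = Psi (sumn mu) (reshape mu (iota 0 (sumn mu))) x.
Proof.
elim: mu x => [|m mu IH] x.
  rewrite /= /Psi (big_pred1 1%g) ?odd_perm1 ?big_nil ?mulr1 // => t.
  by apply/esym/eqP/permS0.
set k' := sumn mu.
rewrite [sumn _]/= W0_cons.
set W := iota 0 m :: _.
pose Phi (t : 'S_(m + k')) := (-1) ^+ odd_perm t *
   \prod_(u <- W) \tr (wmat (fun p => x (permnat t p)) u).
have E1 t : (-1) ^+ odd_perm t * Tj m (fun i => x (permnat t i)) *
    wedgeT mu (fun i => x (permnat t (m + i))) =
    \sum_(s1 : 'S_m) \sum_(s2 : 'S_k') Phi (dsum s1 s2 * t)%g.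
  rewrite Tj_Psi IH /Psi sum3; apply: eq_bigr => s1 _; apply: eq_bigr => s2 _.
  rewrite /Phi sgnM odd_dsum signr_addb big_cons big_map.
  have eA1 : wmat (fun p => x (permnat t (permnat s1 p))) (iota 0 m) =
             wmat (fun p => x (permnat (dsum s1 s2 * t) p)) (iota 0 m).
    rewrite /wmat; apply: eq_big_seq => p; rewrite mem_iota add0n => /andP[_ pm].
    by rewrite permnatM permnat_dsum pm.
  have eA2 u : wmat (fun p => x (permnat t (m + permnat s2 p))) u =
               wmat (fun p => x (permnat (dsum s1 s2 * t) p)) (map (addn m) u).
    rewrite /wmat big_map; apply: eq_bigr => p _.
    by rewrite permnatM permnat_dsum ltnNge leq_addr /= addKn.
  rewrite eA1; under eq_bigr => u _ do rewrite eA2.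
  set A := \tr _; set B := \prod_(_ <- _) _.
  set a := (-1) ^+ _; set b := (-1) ^+ _; set c := (-1) ^+ _.
  ring.
rewrite /= /wedge (eq_bigr _ (fun t _ => E1 t)).
rewrite exchange_big /=.
under eq_bigr => s1 _ do rewrite exchange_big /=.
have E2 D : \sum_(t : 'S_(m + k')) Phi (D * t)%g = Psi (m + k') W x.
  by rewrite [RHS]/Psi [RHS](reindex_inj (mulgI D)).
under eq_bigr => s1 _ do under eq_bigr => s2 _ do rewrite E2.
rewrite !sumr_const !card_Sn; apply: cancel_nat.
by rewrite mulf_neq0 // fact_nz.
Qed.


Lemma std_form k (W : seq (seq nat)) : perm_eq (flatten W) (iota 0 k) ->
  exists rho : 'S_k, W = map (map (permnat rho)) (reshape (map size W) (iota 0 k)).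
Proof.
move=> pW; set L := flatten W.
have uL : uniq L by rewrite (perm_uniq pW) iota_uniq.
have sL : size L = k by rewrite (perm_size pW) size_iota.
have aL p : p \in L -> (p < k)%N by rewrite (perm_mem pW) mem_iota.
pose f (o : 'I_k) : 'I_k := insubd o (nth 0%N L o).
have fv o : val (f o) = nth 0%N L o.
  by rewrite /f insubdK //; apply: aL; rewrite mem_nth // sL.
have f_inj : injective f.
  move=> o1 o2 /(congr1 val); rewrite !fv => /eqP.
  by rewrite nth_uniq ?sL // => /eqP /val_inj.
exists (perm f_inj).
have mL : map (permnat (perm f_inj)) (iota 0 k) = L.
  apply: (@eq_from_nth _ 0%N); first by rewrite size_map size_iota sL.
  move=> i; rewrite size_map size_iota => ik.
  rewrite (nth_map 0%N) ?size_iota // nth_iota // add0n.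
  by rewrite -[i]/(val (Ordinal ik)) permnat_ord permE fv.
by rewrite map_reshape mL /L -/(shape W) flattenK.
Qed.

Lemma uniq_pair (W : seq (seq nat)) : ~~ uniq (map size W) ->
  exists u v W', perm_eq W [:: u, v & W'] /\ size u = size v.
Proof.
elim: W => [|w W IH] //=; rewrite negb_and negbK => /orP[/mapP[v vW ev]|/IH[u [v [W' [pW e]]]]].
  exists w, v, (rem v W); split => //; rewrite perm_cons; exact: perm_to_rem.
exists u, v, (w :: W'); split => //.
apply: (@perm_trans _ [:: w, u, v & W']); first by rewrite perm_cons.
by rewrite -[[:: w, u, v & W']]/([:: w] ++ [:: u; v] ++ W') perm_catCA.
Qed.

Lemma Psi_zero k W x : (2%:R : F) != 0 ->
  perm_eq (flatten W) (iota 0 k) -> all (fun u => u != [::]) W ->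
  ~~ (all odd (map size W) && uniq (map size W)) -> Psi k W x = 0.
Proof.
move=> h2 pW nW.
have ev u W' : perm_eq W (u :: W') -> ~~ odd (size u) -> Psi k W x = 0.
  move=> pu eu; rewrite (@Psi_perm k _ _ x pu); apply: Psi_even_zero => //.
  - apply/allP => p; rewrite -(perm_mem (perm_flatten pu)) (perm_mem pW) mem_iota.
    by [].
  - by rewrite -(perm_uniq (perm_flatten pu)) (perm_uniq pW) iota_uniq.
  - by move/allP: nW; apply; rewrite (perm_mem pu) inE eqxx.
case/nandP.
  case/allPn => n /mapP[u uW ->] ou.
  by apply: (ev u (rem u W)) => //; apply: perm_to_rem.
case/uniq_pair => u [v [W' [pu e]]].
have [ou|eu] := boolP (odd (size u)); last exact: (ev u (v :: W')).
rewrite (@Psi_perm k _ _ x pu); apply: Psi_swap_zero => //.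
- apply/allP => p; rewrite -(perm_mem (perm_flatten pu)) (perm_mem pW) mem_iota.
  by [].
- by rewrite -(perm_uniq (perm_flatten pu)) (perm_uniq pW) iota_uniq.
Qed.


Lemma trSG_TM n k (h : 'I_n -> nat) (s : 'S_n) (x : nat -> M) :
  trSG k h s x = \sum_(t : 'S_k) (-1) ^+ odd_perm t * TM s (fun j => Xblock h x t j).
Proof.
rewrite /trSG /endo_tr /endo_comp /ST_G /TM /tensor.
transitivity (\sum_(i : tidx d n) \sum_(tau : 'S_k) (-1) ^+ odd_perm tau *
   \prod_(t < n) Xblock h x tau t (i (s t)) (i t)).
  apply: eq_bigr => i _.
  rewrite (bigD1 [ffun t => i (s t)]) //= [X in _ + X]big1 ?addr0.
    rewrite /permop; have -> : [forall t, i (s t) == [ffun t => i (s t)] t].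
      by apply/forallP => t; rewrite ffunE.
    rewrite mul1r; apply: eq_bigr => tau _; congr (_ * _).
    by apply: eq_bigr => t _; rewrite ffunE.
  move=> l ll; rewrite /permop.
  have -> : [forall t, i (s t) == l t] = false.
    apply/negbTE/forallP => H; move: ll; rewrite eqE /=.
    have -> : l = [ffun t => i (s t)] by apply/ffunP => t; rewrite ffunE (eqP (H t)).
    by rewrite eqxx.
  by rewrite mul0r.
by rewrite exchange_big; apply: eq_bigr => tau _; rewrite mulr_sumr.
Qed.

Definition hn n (h : 'I_n -> nat) (i : nat) : nat := oapp h 0%N (insub i).
Definition Acc n (h : 'I_n -> nat) (j : nat) : nat := (\sum_(i < j) hn h i)%N.

Lemma hnE n (h : 'I_n -> nat) (t : 'I_n) : hn h t = h t.
Proof. by rewrite /hn valK. Qed.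

Lemma a_eq n (h : 'I_n -> nat) (t : 'I_n) : (\sum_(i < n | (i < t)%N) h i)%N = Acc h t.
Proof.
rewrite /Acc (eq_bigr (fun i : 'I_n => hn h i)); last by move=> i _; rewrite hnE.
transitivity (\sum_(0 <= i < n | (i < t)%N) hn h i)%N; first by rewrite big_mkord.
rewrite [RHS](_ : _ = \sum_(0 <= i < t) hn h i)%N; last by rewrite big_mkord.
by rewrite (big_nat_widen 0 t n) //; apply: ltnW.
Qed.

Lemma AccS n (h : 'I_n -> nat) j : Acc h j.+1 = (Acc h j + hn h j)%N.
Proof. by rewrite /Acc big_ord_recr. Qed.

Lemma Acc_mono n (h : 'I_n -> nat) j j' : (j <= j')%N -> (Acc h j <= Acc h j')%N.
Proof.
move=> /subnKC <-; elim: (j' - j)%N => [|l IH]; first by rewrite addn0.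
by rewrite addnS AccS (leq_trans IH) ?leq_addr.
Qed.

Lemma Acc_n n (h : 'I_n -> nat) : Acc h n = (\sum_(i < n) h i)%N.
Proof. by rewrite /Acc; apply: eq_bigr => i _; rewrite hnE. Qed.

Lemma Acc_blk n (h : 'I_n -> nat) (t : 'I_n) : (Acc h t + h t <= Acc h n)%N.
Proof. by rewrite -(hnE h t) -AccS Acc_mono. Qed.

Lemma Xblock_wmat n k (h : 'I_n -> nat) (x : nat -> M) (tau : 'S_k) (t : 'I_n) :
  (\sum_(i < n) h i)%N = k ->
  Xblock h x tau t = wmat (fun p => x (permnat tau p)) (iota (Acc h t) (h t)).
Proof.
move=> hk; have bk : (Acc h t + h t <= k)%N by rewrite -hk -Acc_n Acc_blk.
rewrite /Xblock /wmat a_eq.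
transitivity (\big[@mulmx F d d d/1%:M]_(0 <= p < k | ((Acc h t <= p) && (p < Acc h t + h t))%N)
   x (permnat tau p)).
  by rewrite big_mkord; apply: eq_bigr => p _; rewrite permnat_ord.
have -> : iota (Acc h t) (h t) = index_iota (Acc h t) (Acc h t + h t).
  by rewrite /index_iota addKn.
rewrite [RHS](big_nat_widen _ _ k) // [RHS](big_nat_widenl _ 0) //.
by apply: eq_bigl => p; rewrite /= andbC.
Qed.

Lemma count_blk n (h : 'I_n -> nat) (P : pred nat) :
  (\sum_(t < n) count P (iota (Acc h t) (h t)) = count P (iota 0 (Acc h n)))%N.
Proof.
rewrite (eq_bigr (fun t : 'I_n => count P (iota (Acc h t) (hn h t)))); last first.
  by move=> t _; rewrite hnE.
rewrite -(big_mkord xpredT (fun t => count P (iota (Acc h t) (hn h t)))).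
have gen N : (\sum_(0 <= t < N) count P (iota (Acc h t) (hn h t)) =
    count P (iota 0 (Acc h N)))%N.
  elim: N => [|N IH]; first by rewrite big_geq // /Acc big_ord0.
  by rewrite big_nat_recr //= IH AccS iotaD count_cat.
exact: gen.
Qed.


Lemma mwE (i0 : 'I_d) y u : u != [::] -> mw i0 y u = wmat y u.
Proof. by case: u. Qed.

Lemma tr_Emx i0 : \tr (Emx i0) = 1.
Proof. by rewrite /mxtrace sum_Emx. Qed.

End Main.

Lemma card_count (T : finType) (A : {set T}) (P : pred T) :
  #|[set x in A | P x]| = count P (enum A).
Proof.
rewrite -sum1_count big_enum_cond -sum1_card; apply: eq_bigl => x.
by rewrite inE.
Qed.

Lemma card_countT (T : finType) (P : pred T) :
  #|[set x | P x]| = count P (enum T).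
Proof.
rewrite -sum1_count big_enum_cond -sum1_card; apply: eq_bigl => x.
by rewrite !inE.
Qed.

Theorem mainTheorem5 (F : fieldType) (d n k : nat) (h : 'I_n -> nat)
  (s : 'S_n) :
  [pchar F] =i pred0 -> (0 < d)%N ->
  (forall i, (0 < h i)%N) ->
  (forall i j : 'I_n, (i <= j)%N -> (h j <= h i)%N) ->
  (\sum_(i < n) h i)%N = k ->
  let mu := cyc_type h s in
  (~~ (all odd mu && uniq mu) ->
     forall x : nat -> 'M[F]_d, trSG k h s x = 0) /\
  (all odd mu && uniq mu ->
     exists2 c : F, c = 1 \/ c = -1 &
       forall x : nat -> 'M[F]_d, trSG k h s x = c * wedgeT mu x).
Proof.
move=> hF d0 hpos _ hk mu.
have h2 : (2%:R : F) != 0 by rewrite ((pcharf0P F).1 hF).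
pose i0 : 'I_d := Ordinal d0.
pose blk (t : 'I_n) := iota (Acc h t) (h t).
have blk_nz t : blk t != [::] by rewrite -size_eq0 size_iota -lt0n hpos.
have Hw : forall t, blk t = [::] -> s t = t by move=> t e; move: (blk_nz t); rewrite e.
have [w' [r1 r2 r3]] := @reduce F d n i0 s blk Hw.
pose W := [seq w' t | t <- enum 'I_n & w' t != [::]].
have trE (x : nat -> 'M[F]_d) : trSG k h s x = Psi k W x.
  rewrite trSG_TM /Psi; apply: eq_bigr => tau _; congr (_ * _).
  rewrite (@eq_TM F d n s _ (fun t => mw i0 (fun p => x (permnat tau p)) (blk t))); last first.
    by move=> t; rewrite Xblock_wmat // mwE.
  rewrite r1 big_map big_filter big_enum_cond [RHS]big_mkcond /=.
  apply: eq_bigr => t _; case: ifP => [nz|/negbFE/eqP ->]; first by rewrite mwE.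
  by rewrite tr_Emx.
have flat : perm_eq (flatten W) (iota 0 k).
  apply/seq.permP => P; rewrite count_flatten sumnE !big_map big_filter big_enum_cond.
  rewrite -hk -Acc_n -count_blk -r2 [LHS]big_mkcond /=.
  by apply: eq_bigr => t _; case: ifP => // /negbFE/eqP ->.
have nW : all (fun u => u != [::]) W.
  by apply/allP => u /mapP[t]; rewrite mem_filter => /andP[nz _] ->.
have csumE C : csum blk C = (\sum_(i in C) h i)%N.
  by apply: eq_bigr => i _; rewrite size_iota.
have cnt m : (0 < m)%N -> count (pred1 m) (map size W) =
    count (pred1 m) [seq (\sum_(i in c) h i)%N | c : {set 'I_n} <- enum (porbits s)].
  move=> m0; rewrite !count_map -card_count.
  rewrite (eq_card (B := [set C in porbits s | csum blk C == m])); last first.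
    by move=> C; rewrite !inE csumE.
  rewrite -r3 // count_filter card_countT; apply: eq_count => t /=.
  rewrite /= andbC; case: (w' t =P [::]) => [->|_] //=.
  by move: m0; case: m.
have ps : perm_eq [seq (\sum_(i in c) h i)%N | c : {set 'I_n} <- enum (porbits s)] (map size W).
  apply/allP => m _; apply/eqP.
  have [->|m0] := posnP m; last by rewrite cnt.
  rewrite (count_memPn _) ?(count_memPn _) //.
    by apply/mapP => -[u uW] /esym/eqP; rewrite size_eq0; move/allP: nW => /(_ u uW) /negPf ->.
  apply/mapP => -[C]; rewrite mem_enum => /imsetP[z _ ->] /esym/eqP.
  rewrite sum_nat_eq0 => /forall_inP /(_ z (porbit_id s z)).
  by move/eqP=> hz; move: (hpos z); rewrite hz.
have cycE : mu = sort geq (map size W).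
  rewrite /mu /cyc_type; apply/(perm_sortP _ _ _).
  - by move=> a b; apply: leq_total.
  - by move=> a b c hba hcb; apply: leq_trans hcb hba.
  - move=> a b /andP[hab hba]; apply: anti_leq; apply/andP; split; [exact: hba | exact: hab].
  - exact: ps.
have pmu : perm_eq mu (map size W) by rewrite cycE perm_sort.
split.
  move=> nc x; rewrite trE; apply: Psi_zero => //.
  by rewrite -(perm_all _ pmu) -(perm_uniq pmu).
move=> oc.
pose W2 := sort (relpre size geq) W.
have pW2 : perm_eq W2 W by rewrite perm_sort.
have sW2 : map size W2 = mu by rewrite cycE sort_map.
have flat2 : perm_eq (flatten W2) (iota 0 k) := perm_trans (perm_flatten pW2) flat.
have [rho erho] := std_form flat2.
have kE : k = sumn mu.
  by rewrite -sW2 -size_flatten (perm_size flat2) size_iota.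
exists ((-1) ^+ odd_perm rho).
  by case: (odd_perm rho); [right; rewrite expr1 | left; rewrite expr0].
have pW2' : perm_eq W W2 by rewrite perm_sym.
move=> x; rewrite trE (@Psi_perm F d k W W2 x pW2') erho Psi_relabel sW2.
congr (_ * _); rewrite kE; exact: (esym (wedgeT_Psi hF mu x)).
Qed.
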